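(* Let $X$ be a geodesic metric space, $e\in X$ and $N$ a Morse gauge. Then $X^{(N)}_e$, with the metric restricted from $X$, is $8N(3,0)$-hyperbolic, i.e. $(x\cdot y)_w\ge\min\{(x\cdot z)_w,(z\cdot y)_w\}-8N(3,0)$ for all $w,x,y,z\in X^{(N)}_e$.
   Context: A Morse gauge is a function $N$ assigning to each $(K,C)$ ($K\ge1,C\ge0$) a number $N(K,C)\ge0$. A geodesic $\gamma$ is $N$-Morse if every $(K,C)$-quasi-geodesic with endpoints on $\gamma$ lies in the $N(K,C)$-neighbourhood of $\gamma$. $X^{(N)}_e$ is the set of $y\in X$ such that some geodesic from $e$ to $y$ is $N$-Morse. The Gromov product is $(x\cdot y)_w=\frac12(d(w,x)+d(w,y)-d(x,y))$. *)

(* Defs.v *)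
From Stdlib Require Import Reals Lra.
Open Scope R_scope.

Definition is_metric {X : Type} (d : X -> X -> R) : Prop :=
  (forall x y, 0 <= d x y) /\
  (forall x y, d x y = 0 <-> x = y) /\
  (forall x y, d x y = d y x) /\
  (forall x y z, d x z <= d x y + d y z).

Definition is_geodesic {X : Type} (d : X -> X -> R) (gamma : R -> X) (L : R) : Prop :=
  0 <= L /\
  forall s t, 0 <= s <= L -> 0 <= t <= L -> d (gamma s) (gamma t) = Rabs (s - t).

Definition geodesic_from_to {X : Type} (d : X -> X -> R) (gamma : R -> X) (L : R)
  (x y : X) : Prop :=
  is_geodesic d gamma L /\ gamma 0 = x /\ gamma L = y.

Definition geodesic_space {X : Type} (d : X -> X -> R) : Prop :=
  is_metric d /\
  forall x y : X, exists (gamma : R -> X) (L : R), geodesic_from_to d gamma L x y.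

(* q : [a, b] -> X is a (K,C)-quasi-geodesic, i.e. a (K,C)-quasi-isometric
   embedding of the compact interval [a, b] (no continuity required). *)
Definition quasi_geodesic {X : Type} (d : X -> X -> R) (K C : R) (q : R -> X)
  (a b : R) : Prop :=
  a <= b /\
  forall s t, a <= s <= b -> a <= t <= b ->
    Rabs (s - t) / K - C <= d (q s) (q t) /\ d (q s) (q t) <= K * Rabs (s - t) + C.

Definition morse_gauge (N : R -> R -> R) : Prop :=
  forall K C, 1 <= K -> 0 <= C -> 0 <= N K C.

Definition N_Morse {X : Type} (d : X -> X -> R) (N : R -> R -> R) (gamma : R -> X)
  (L : R) : Prop :=
  forall (K C : R) (q : R -> X) (a b : R),
    1 <= K -> 0 <= C ->
    quasi_geodesic d K C q a b ->
    (exists s, 0 <= s <= L /\ q a = gamma s) ->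
    (exists s, 0 <= s <= L /\ q b = gamma s) ->
    forall t, a <= t <= b -> exists s, 0 <= s <= L /\ d (q t) (gamma s) <= N K C.

Definition morse_stratum {X : Type} (d : X -> X -> R) (N : R -> R -> R) (e y : X) : Prop :=
  exists (gamma : R -> X) (L : R), geodesic_from_to d gamma L e y /\ N_Morse d N gamma L.

Definition gromov_product {X : Type} (d : X -> X -> R) (x y w : X) : R :=
  (d w x + d w y - d x y) / 2.

(* Main.v *)
Require Import Defs.
From Stdlib Require Import Reals Lra.
Open Scope R_scope.

Lemma lip_cont (f : R -> R) :
  (forall s t, Rabs (f s - f t) <= Rabs (s - t)) -> forall c, continuity_pt f c.
Proof.
  intros H c. unfold continuity_pt, continue_in, limit1_in, limit_in.
  intros eps Heps. exists eps. split; [lra|].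
  intros x [_ Hx]. simpl in *. unfold R_dist in *.
  eapply Rle_lt_trans; [apply H|exact Hx].
Qed.

Definition clamp (l s : R) := Rmax 0 (Rmin l s).

Lemma clamp_lip l s t : 0 <= l -> Rabs (clamp l s - clamp l t) <= Rabs (s - t).
Proof.
  intros Hl. unfold clamp, Rmax, Rmin.
  repeat destruct Rle_dec; unfold Rabs; repeat destruct Rcase_abs; lra.
Qed.

Lemma clamp_id l s : 0 <= s <= l -> clamp l s = s.
Proof. intros H. unfold clamp, Rmax, Rmin. repeat destruct Rle_dec; lra. Qed.

Lemma clamp_in l s : 0 <= l -> 0 <= clamp l s <= l.
Proof. intros H. unfold clamp, Rmax, Rmin. repeat destruct Rle_dec; lra. Qed.

Lemma closest_point {X : Type} (d : X -> X -> R) (g : R -> X) (l : R) (e : X) :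
  is_metric d -> is_geodesic d g l ->
  exists r0, 0 <= r0 <= l /\ forall c, 0 <= c <= l -> d e (g r0) <= d e (g c).
Proof.
  intros [Hpos [Hz [Hsym Htri]]] [Hl Hg].
  set (f := fun s => d e (g (clamp l s))).
  assert (Hc : forall c, continuity_pt f c).
  { apply lip_cont. intros s t. unfold f.
    assert (Hd : d (g (clamp l s)) (g (clamp l t)) = Rabs (clamp l s - clamp l t))
      by (apply Hg; apply clamp_in; lra).
    pose proof (clamp_lip l s t Hl).
    pose proof (Htri e (g (clamp l s)) (g (clamp l t))).
    pose proof (Htri e (g (clamp l t)) (g (clamp l s))).
    rewrite (Hsym (g (clamp l t)) (g (clamp l s))) in H1.
    unfold Rabs at 1; destruct Rcase_abs; lra. }
  destruct (continuity_ab_min f 0 l Hl (fun c _ => Hc c)) as [mx [Hm Hin]].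
  exists mx. split; auto. intros c Hcin. specialize (Hm c Hcin). unfold f in Hm.
  rewrite !clamp_id in Hm; auto.
Qed.

Lemma mixed_bound {X : Type} (d : X -> X -> R) e g l r0 sg rho s t :
  is_metric d -> is_geodesic d g l -> 0 <= r0 <= l ->
  (forall c, 0 <= c <= l -> d e (g r0) <= d e (g c)) ->
  is_geodesic d sg rho -> sg 0 = e -> sg rho = g r0 ->
  0 <= s <= rho -> rho < t <= rho + r0 ->
  Rabs (s - t) / 3 - 0 <= d (sg s) (g (r0 + rho - t)) /\
  d (sg s) (g (r0 + rho - t)) <= 3 * Rabs (s - t) + 0.
Proof.
  intros [Hpos [Hz [Hsym Htri]]] [Hl Hg] Hr0 Hmin [Hrho Hs] He Hz0 Hsin Htin.
  assert (E1 : d (sg s) (sg rho) = rho - s)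
    by (rewrite Hs by lra; unfold Rabs; destruct Rcase_abs; lra).
  assert (E2 : d (g r0) (g (r0 + rho - t)) = t - rho)
    by (rewrite Hg by lra; unfold Rabs; destruct Rcase_abs; lra).
  assert (E3 : d e (sg s) = s)
    by (rewrite <- He, Hs by lra; unfold Rabs; destruct Rcase_abs; lra).
  assert (E4 : d e (g r0) = rho)
    by (rewrite <- Hz0, <- He, Hs by lra; unfold Rabs; destruct Rcase_abs; lra).
  assert (M : d e (g r0) <= d e (g (r0 + rho - t))) by (apply Hmin; lra).
  pose proof (Htri e (sg s) (g (r0 + rho - t))).
  pose proof (Htri (sg s) (sg rho) (g (r0 + rho - t))).
  pose proof (Htri (g r0) (sg s) (g (r0 + rho - t))).
  rewrite Hz0 in *. rewrite (Hsym (g r0) (sg s)) in H1.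
  assert (Ha : Rabs (s - t) = t - s) by (unfold Rabs; destruct Rcase_abs; lra).
  rewrite Ha. split; lra.
Qed.

Lemma L1 {X : Type} (d : X -> X -> R) (N : R -> R -> R) e al a x g l r0 sg rho :
  is_metric d -> geodesic_from_to d al a e x -> N_Morse d N al a ->
  is_geodesic d g l -> g 0 = x -> 0 <= r0 <= l ->
  (forall c, 0 <= c <= l -> d e (g r0) <= d e (g c)) ->
  is_geodesic d sg rho -> sg 0 = e -> sg rho = g r0 ->
  forall t, 0 <= t <= rho -> exists s, 0 <= s <= a /\ d (sg t) (al s) <= N 3 0.
Proof.
  intros Hm [Ha [Hal0 Hala]] HM Hgg Hg0 Hr0 Hmin Hsg Hs0 Hsr t Ht.
  set (Q := fun s => if Rle_dec s rho then sg s else g (r0 + rho - s)).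
  assert (Hq : quasi_geodesic d 3 0 Q 0 (rho + r0)).
  { pose proof Hsg as [Hrho Hsg']. split; [lra|].
    intros s u Hs Hu. unfold Q.
    destruct (Rle_dec s rho); destruct (Rle_dec u rho).
    - rewrite Hsg' by lra. pose proof (Rabs_pos (s - u)). split; lra.
    - apply (mixed_bound d e g l r0 sg rho s u); auto; split; lra.
    - pose proof Hm as [Hp [Hz [Hsym Htri]]].
      rewrite Hsym, Rabs_minus_sym.
      apply (mixed_bound d e g l r0 sg rho u s); auto; split; lra.
    - destruct Hgg as [Hl Hg]. rewrite Hg by lra.
      replace (r0 + rho - s - (r0 + rho - u)) with (- (s - u)) by ring.
      rewrite Rabs_Ropp. pose proof (Rabs_pos (s - u)). split; lra. }
  destruct Hsg as [Hrho Hsg']. pose proof Ha as [Ha0 _].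
  destruct (HM 3 0 Q 0 (rho + r0) ltac:(lra) ltac:(lra) Hq) with (t := t) as [s [Hs Hd]].
  - exists 0. split; [lra|]. unfold Q. destruct Rle_dec; [|lra]. congruence.
  - exists a. split; [lra|]. unfold Q. destruct Rle_dec.
    + assert (r0 = 0) by lra. subst r0. replace (rho + 0) with rho by ring. rewrite Hsr, Hg0. congruence.
    + replace (r0 + rho - (rho + r0)) with 0 by ring. congruence.
  - lra.
  - exists s. split; auto. unfold Q in Hd. destruct Rle_dec; [exact Hd|lra].
Qed.

Lemma L2 {X : Type} (d : X -> X -> R) (N : R -> R -> R) e al a x be b y :
  geodesic_space d ->
  geodesic_from_to d al a e x -> N_Morse d N al a ->
  geodesic_from_to d be b e y -> N_Morse d N be b ->
  exists sg rho, is_geodesic d sg rho /\ sg 0 = e /\ gromov_product d x y e <= rho /\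
    (forall t, 0 <= t <= rho -> exists s, 0 <= s <= a /\ d (sg t) (al s) <= N 3 0) /\
    (forall t, 0 <= t <= rho -> exists s, 0 <= s <= b /\ d (sg t) (be s) <= N 3 0).
Proof.
  intros [Hm Hgs] Hal HMa Hbe HMb.
  destruct (Hgs x y) as [g [l [Hg [Hg0 Hgl]]]].
  destruct (closest_point d g l e Hm Hg) as [r0 [Hr0 Hmin]].
  destruct (Hgs e (g r0)) as [sg [rho [Hsg [Hs0 Hsr]]]].
  exists sg, rho. split; [exact Hsg|]. split; [exact Hs0|].
  split; [|split].
  - pose proof Hm as [Hp [Hz [Hsym Htri]]].
    pose proof Hg as [Hl Hg'].
    pose proof Hsg as [Hrho Hsg'].
    assert (E1 : d x y = l) by (rewrite <- Hg0, <- Hgl, Hg' by lra; unfold Rabs; destruct Rcase_abs; lra).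
    assert (E2 : d (g r0) x = r0) by (rewrite <- Hg0, Hg' by lra; unfold Rabs; destruct Rcase_abs; lra).
    assert (E3 : d (g r0) y = l - r0) by (rewrite <- Hgl, Hg' by lra; unfold Rabs; destruct Rcase_abs; lra).
    assert (E4 : d e (g r0) = rho) by (rewrite <- Hs0, <- Hsr, Hsg' by lra; unfold Rabs; destruct Rcase_abs; lra).
    pose proof (Htri e (g r0) x). pose proof (Htri e (g r0) y).
    unfold gromov_product. lra.
  - intros t Ht. eapply (L1 d N e al a x g l r0 sg rho); eauto.
  - pose proof Hg as [Hl Hg'].
    set (g' := fun s => g (l - s)).
    assert (Hg'g : is_geodesic d g' l).
    { split; auto. intros s u Hs Hu. unfold g'. rewrite Hg' by lra.
      replace (l - s - (l - u)) with (- (s - u)) by ring. apply Rabs_Ropp. }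
    intros t Ht. apply (L1 d N e be b y g' l (l - r0) sg rho); auto.
    + unfold g'. replace (l - 0) with l by ring. auto.
    + lra.
    + intros c Hc. unfold g'. replace (l - (l - r0)) with r0 by ring. apply Hmin. lra.
    + unfold g'. replace (l - (l - r0)) with r0 by ring. auto.
Qed.

Lemma geo_facts {X : Type} (d : X -> X -> R) al a e x s :
  is_metric d -> geodesic_from_to d al a e x -> 0 <= s <= a ->
  d e (al s) = s /\ d (al s) x = a - s /\ d e x = a /\ d x (al s) = a - s.
Proof.
  intros [Hp [Hz [Hsym Htri]]] [[Ha Hg] [H0 Ha']] Hs.
  subst e x. rewrite (Hsym _ (al s)).
  rewrite !Hg by lra. repeat split; unfold Rabs; destruct Rcase_abs; lra.
Qed.

Lemma gp_nonneg {X : Type} (d : X -> X -> R) x y w :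
  is_metric d -> 0 <= gromov_product d x y w.
Proof.
  intros [Hp [Hz [Hsym Htri]]]. unfold gromov_product.
  pose proof (Htri x w y). rewrite (Hsym x w) in H. lra.
Qed.

Lemma L3 {X : Type} (d : X -> X -> R) (N : R -> R -> R) e al a x be b y ze c z :
  geodesic_space d -> morse_gauge N ->
  geodesic_from_to d al a e x -> N_Morse d N al a ->
  geodesic_from_to d be b e y -> N_Morse d N be b ->
  geodesic_from_to d ze c e z -> N_Morse d N ze c ->
  gromov_product d x y e >=
    Rmin (gromov_product d x z e) (gromov_product d z y e) - 4 * N 3 0.
Proof.
  intros Hgs HN Hal HMa Hbe HMb Hze HMz.
  pose proof Hgs as [Hm _].
  destruct (L2 d N e al a x ze c z Hgs Hal HMa Hze HMz)
    as [s1 [r1 [Hs1 [Hs10 [Hr1 [Px1 Pz1]]]]]].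
  destruct (L2 d N e ze c z be b y Hgs Hze HMz Hbe HMb)
    as [s2 [r2 [Hs2 [Hs20 [Hr2 [Pz2 Py2]]]]]].
  pose proof (gp_nonneg d x z e Hm). pose proof (gp_nonneg d z y e Hm).
  set (m := Rmin (gromov_product d x z e) (gromov_product d z y e)).
  assert (Hm1 : m <= gromov_product d x z e) by apply Rmin_l.
  assert (Hm2 : m <= gromov_product d z y e) by apply Rmin_r.
  assert (Hm0 : 0 <= m) by (unfold m, Rmin; destruct Rle_dec; lra).
  destruct (Px1 m ltac:(lra)) as [t1 [Ht1 D1]].
  destruct (Pz1 m ltac:(lra)) as [t2 [Ht2 D2]].
  destruct (Pz2 m ltac:(lra)) as [t3 [Ht3 D3]].
  destruct (Py2 m ltac:(lra)) as [t4 [Ht4 D4]].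
  destruct (geo_facts d al a e x t1 Hm Hal Ht1) as [A1 [A2 [A3 A4]]].
  destruct (geo_facts d ze c e z t2 Hm Hze Ht2) as [B1 [B2 [B3 B4]]].
  destruct (geo_facts d ze c e z t3 Hm Hze Ht3) as [C1 [C2 [C3 C4]]].
  destruct (geo_facts d be b e y t4 Hm Hbe Ht4) as [E1 [E2 [E3 E4]]].
  pose proof Hm as [Hp [Hz [Hsym Htri]]].
  assert (F1 : d e (s1 m) = m).
  { destruct Hs1 as [_ Hg]. rewrite <- Hs10, Hg by lra. unfold Rabs; destruct Rcase_abs; lra. }
  assert (F2 : d e (s2 m) = m).
  { destruct Hs2 as [_ Hg]. rewrite <- Hs20, Hg by lra. unfold Rabs; destruct Rcase_abs; lra. }
  assert (G23 : d (ze t2) (ze t3) = Rabs (t2 - t3)).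
  { destruct Hze as [[_ Hg] _]. apply Hg; lra. }
  pose proof (Htri e (s1 m) (al t1)).
  pose proof (Htri e (al t1) (s1 m)).
  pose proof (Htri e (s1 m) (ze t2)).
  pose proof (Htri e (ze t2) (s1 m)).
  pose proof (Htri e (s2 m) (ze t3)).
  pose proof (Htri e (ze t3) (s2 m)).
  pose proof (Htri e (s2 m) (be t4)).
  pose proof (Htri e (be t4) (s2 m)).
  pose proof (Htri x (al t1) y).
  pose proof (Htri (al t1) (s1 m) y).
  pose proof (Htri (s1 m) (ze t2) y).
  pose proof (Htri (ze t2) (ze t3) y).
  pose proof (Htri (ze t3) (s2 m) y).
  pose proof (Htri (s2 m) (be t4) y).
  rewrite (Hsym (al t1) (s1 m)) in *.
  rewrite (Hsym (ze t2) (s1 m)) in *.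
  rewrite (Hsym (ze t3) (s2 m)) in *.
  rewrite (Hsym (be t4) (s2 m)) in *.
  unfold gromov_product at 1. rewrite A3, E3.
  assert (Habs : Rabs (t2 - t3) <= 2 * N 3 0) by (unfold Rabs; destruct Rcase_abs; lra).
  lra.
Qed.

Lemma min_split a b c dl : c >= Rmin a b - dl -> c >= a - dl \/ c >= b - dl.
Proof. unfold Rmin; destruct Rle_dec; lra. Qed.

Lemma L4 {X : Type} (d : X -> X -> R) e w x y z dl :
  is_metric d ->
  gromov_product d x y e >= Rmin (gromov_product d x z e) (gromov_product d z y e) - dl ->
  gromov_product d x y e >= Rmin (gromov_product d x w e) (gromov_product d w y e) - dl ->
  gromov_product d w z e >= Rmin (gromov_product d w x e) (gromov_product d x z e) - dl ->
  gromov_product d w z e >= Rmin (gromov_product d w y e) (gromov_product d y z e) - dl ->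
  gromov_product d x y w >= Rmin (gromov_product d x z w) (gromov_product d z y w) - 2 * dl.
Proof.
  intros [Hp [Hz [Hsym Htri]]] H1 H2 H3 H4.
  apply min_split in H1. apply min_split in H2. apply min_split in H3. apply min_split in H4.
  unfold gromov_product in *.
  pose proof (Hsym x w). pose proof (Hsym w y). pose proof (Hsym y z). pose proof (Hsym z y).
  pose proof (Hsym w x). pose proof (Hsym z w).
  unfold Rmin; destruct Rle_dec;
  destruct H1; destruct H2; destruct H3; destruct H4; lra.
Qed.

Theorem proposition3p2 (X : Type) (d : X -> X -> R) (e : X) (N : R -> R -> R) :
  geodesic_space d ->
  morse_gauge N ->
  forall w x y z : X,
    morse_stratum d N e w -> morse_stratum d N e x ->
    morse_stratum d N e y -> morse_stratum d N e z ->
    gromov_product d x y w >=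
      Rmin (gromov_product d x z w) (gromov_product d z y w) - 8 * N 3 0.
Proof.
  intros Hgs HN w x y z [gw [lw [Gw Mw]]] [gx [lx [Gx Mx]]]
    [gy [ly [Gy My]]] [gz [lz [Gz Mz]]].
  replace (8 * N 3 0) with (2 * (4 * N 3 0)) by ring.
  apply (L4 d e); [apply Hgs| | | |].
  - eapply L3; eauto.
  - eapply L3; eauto.
  - eapply L3; eauto.
  - eapply L3; eauto.
Qed.
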